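(* Fix a constant $c\ge 10$. Consider the random pairwise load balancing process on $n\ge2$ nodes with arbitrary initial load vector $\ell(0)\in\mathbb{N}_0^n$. Let $T_2$ be the first time step $t\ge T_1$ such that $\max_{1\le i\le n}\ell_i(t)\le \varnothing+2c$ and $\min_{1\le i\le n}\ell_i(t)\ge \varnothing-2c$. Then with high probability (probability $1-O(1/n)$), $T_2 = T_1+O(n\log n)$, where the constant in $O(\cdot)$ depends only on $c$.
   Context: Random pairwise load balancing process: $n$ nodes, $m$ tokens, load vector $\ell(t)\in\mathbb{Z}^n$. In each time step $t$, independently, an ordered pair $(u,v)$ of distinct nodes is chosen uniformly at random and loads become $\ell_u(t+1)=\lceil(\ell_u(t)+\ell_v(t))/2\rceil$, $\ell_v(t+1)=\lfloor(\ell_u(t)+\ell_v(t))/2\rfloor$. Average load $\varnothing=m/n$; potential $\Phi(\ell)=\sum_i(\ell_i-\varnothing)^2$; $T_1$ is the first time $t$ with $\Phi(\ell(t))<n$. *)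

(* Defs.v *)
From Stdlib Require Import Reals ZArith Arith List Classical ClassicalDescription.
Import ListNotations.
Open Scope R_scope.

(* Nodes are 0, ..., n-1; a load vector is a function nat -> Z (only the
   values at indices < n matter). *)
Definition load := nat -> Z.

Definition step (l : load) (p : nat * nat) : load :=
  let u := fst p in let v := snd p in
  let s := (l u + l v)%Z in
  fun i => if Nat.eqb i u then Z.div (s + 1) 2
           else if Nat.eqb i v then Z.div s 2 else l i.

Definition traj (l0 : load) (s : list (nat * nat)) (t : nat) : load :=
  fold_left step (firstn t s) l0.

Definition pairs (n : nat) : list (nat * nat) :=
  filter (fun p => negb (Nat.eqb (fst p) (snd p))) (list_prod (seq 0 n) (seq 0 n)).

(* All choice sequences of length N (the uniform sample space for N steps). *)
Fixpoint seqs (n N : nat) : list (list (nat * nat)) :=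
  match N with
  | O => [[]]
  | S N' => flat_map (fun s => map (fun p => s ++ [p]) (pairs n)) (seqs n N')
  end.

Definition sumR (n : nat) (f : nat -> R) : R := fold_right Rplus 0 (map f (seq 0 n)).

Definition avg (n : nat) (l0 : load) : R := sumR n (fun i => IZR (l0 i)) / INR n.

Definition Phi (n : nat) (a : R) (l : load) : R := sumR n (fun i => (IZR (l i) - a) ^ 2).

Definition is_T1 (n : nat) (l0 : load) (s : list (nat * nat)) (t1 : nat) : Prop :=
  Phi n (avg n l0) (traj l0 s t1) < INR n /\
  forall t, (t < t1)%nat -> INR n <= Phi n (avg n l0) (traj l0 s t).

Definition good (n : nat) (c : R) (l0 : load) (l : load) : Prop :=
  forall i, (i < n)%nat ->
    IZR (l i) <= avg n l0 + 2 * c /\ avg n l0 - 2 * c <= IZR (l i).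

(* Finite-horizon version of the bad event {T_1 < oo and T_2 > T_1 + D}:
   T_1 occurs, T_1 + D <= N (so the whole window is determined by the first
   N steps), and no time t in [T_1, T_1 + D] is good. *)
Definition bad_event (n : nat) (c D : R) (l0 : load) (N : nat)
    (s : list (nat * nat)) : Prop :=
  exists t1, is_T1 n l0 s t1 /\ INR t1 + D <= INR N /\
    forall t, (t1 <= t)%nat -> INR t <= INR t1 + D -> ~ good n c l0 (traj l0 s t).

Definition prob (n N : nat) (E : list (nat * nat) -> Prop) : R :=
  INR (length (filter (fun s => if excluded_middle_informative (E s) then true else false)
                      (seqs n N)))
  / INR (length (seqs n N)).

(* Main.v *)
Require Import Defs.
From Stdlib Require Import Reals ZArith Arith List.
From Stdlib Require Import Lia Lra Classical ClassicalDescription.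
Import ListNotations.
Open Scope R_scope.


Definition sumL {A} (l : list A) (f : A -> R) : R := fold_right Rplus 0 (map f l).

Lemma sumL_app {A} (l1 l2 : list A) f : sumL (l1 ++ l2) f = sumL l1 f + sumL l2 f.
Proof. unfold sumL; induction l1; simpl; [lra| rewrite IHl1; lra]. Qed.

Lemma sumL_ext {A} (l : list A) f g : (forall x, In x l -> f x = g x) -> sumL l f = sumL l g.
Proof. unfold sumL; induction l; simpl; intros H; auto. rewrite H, IHl; auto. Qed.

Lemma sumL_le {A} (l : list A) f g : (forall x, In x l -> f x <= g x) -> sumL l f <= sumL l g.
Proof. unfold sumL; induction l; simpl; intros H; [lra|]. specialize (IHl (fun x h => H x (or_intror h))). specialize (H a (or_introl eq_refl)). lra. Qed.

Lemma sumL_plus {A} (l : list A) f g : sumL l (fun x => f x + g x) = sumL l f + sumL l g.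
Proof. unfold sumL; induction l; simpl; [lra| rewrite IHl; lra]. Qed.

Lemma sumL_minus {A} (l : list A) f g : sumL l (fun x => f x - g x) = sumL l f - sumL l g.
Proof. unfold sumL; induction l; simpl; [lra| rewrite IHl; lra]. Qed.

Lemma sumL_scal {A} (l : list A) r f : sumL l (fun x => r * f x) = r * sumL l f.
Proof. unfold sumL; induction l; simpl; [lra| rewrite IHl; lra]. Qed.

Lemma sumL_nonneg {A} (l : list A) f : (forall x, In x l -> 0 <= f x) -> 0 <= sumL l f.
Proof. unfold sumL; induction l; simpl; intros H; [lra|].
  specialize (IHl (fun x h => H x (or_intror h))). specialize (H a (or_introl eq_refl)). lra. Qed.

Lemma sumL_ge_term {A} (l : list A) f x : In x l -> (forall y, In y l -> 0 <= f y) -> f x <= sumL l f.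
Proof. unfold sumL; induction l; simpl; intros Hx H; [contradiction|].
  destruct Hx as [Hax|Hx]; [subst a|].
  - assert (0 <= fold_right Rplus 0 (map f l)) by (apply (sumL_nonneg l f); auto). specialize (H x (or_introl eq_refl)); lra.
  - specialize (IHl Hx (fun y h => H y (or_intror h))). specialize (H a (or_introl eq_refl)). lra. Qed.

Lemma sumL_length {A} (l : list A) : sumL l (fun _ => 1) = INR (length l).
Proof. unfold sumL; induction l; simpl; auto. rewrite IHl. destruct (length l); simpl; lra. Qed.

Lemma sumL_filter {A} (l : list A) (P : A -> bool) f :
  sumL (filter P l) f = sumL l (fun x => if P x then f x else 0).
Proof. unfold sumL; induction l; simpl; auto. destruct (P a); simpl; rewrite IHl; lra. Qed.

Lemma sumL_prod {A B} (l1 : list A) (l2 : list B) f :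
  sumL (list_prod l1 l2) f = sumL l1 (fun u => sumL l2 (fun v => f (u, v))).
Proof. induction l1; simpl. reflexivity. rewrite sumL_app, IHl1. unfold sumL at 1 3. simpl. f_equal.
  unfold sumL; rewrite map_map; reflexivity. Qed.

Lemma sumL_flat_map {A B} (l : list A) (g : A -> list B) f :
  sumL (flat_map g l) f = sumL l (fun x => sumL (g x) f).
Proof. induction l; simpl. reflexivity. rewrite sumL_app, IHl. reflexivity. Qed.

Lemma sumL_map {A B} (l : list A) (g : A -> B) f : sumL (map g l) f = sumL l (fun x => f (g x)).
Proof. unfold sumL. rewrite map_map. reflexivity. Qed.

Lemma sumL_zero {A} (l : list A) : sumL l (fun _ => 0) = 0.
Proof. unfold sumL; induction l; simpl; auto. rewrite IHl; lra. Qed.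

Lemma sumL_cons {A} (a : A) l f : sumL (a :: l) f = f a + sumL l f.
Proof. reflexivity. Qed.

Lemma sumL_swap {A B} (l1 : list A) (l2 : list B) f :
  sumL l1 (fun x => sumL l2 (fun y => f x y)) = sumL l2 (fun y => sumL l1 (fun x => f x y)).
Proof. induction l1.
  - change (0 = sumL l2 (fun _ => 0)). rewrite sumL_zero; auto.
  - rewrite sumL_cons, IHl1. rewrite <- sumL_plus. apply sumL_ext; intros. rewrite sumL_cons. reflexivity. Qed.

Lemma length_filter_sum {A} (l : list A) (P : A -> bool) :
  INR (length (filter P l)) = sumL l (fun x => if P x then 1 else 0).
Proof. rewrite <- sumL_length, sumL_filter. reflexivity. Qed.

Lemma sumL_le1 {A} (l : list A) f : NoDup l -> (forall x, In x l -> f x = 0 \/ f x = 1) ->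
  (forall x y, In x l -> In y l -> f x = 1 -> f y = 1 -> x = y) -> sumL l f <= 1.
Proof. unfold sumL; induction l; simpl; intros ND H U; [lra|]. inversion ND; subst.
  destruct (H a (or_introl eq_refl)) as [E|E].
  - rewrite E. assert (fold_right Rplus 0 (map f l) <= 1); [|lra]. apply IHl; auto.
  - rewrite E. assert (fold_right Rplus 0 (map f l) = 0); [|lra].
    transitivity (sumL l (fun _ => 0)). apply sumL_ext. intros x Hx.
    destruct (H x (or_intror Hx)) as [E'|E']; auto. exfalso. assert (a = x) by (apply U; auto). subst; contradiction.
    apply sumL_zero. Qed.

Lemma sumR_S n f : sumR (S n) f = sumR n f + f n.
Proof. unfold sumR. rewrite seq_S, map_app, fold_right_app. simpl.
  change (fold_right Rplus (f n + 0) (map f (seq 0 n)) = fold_right Rplus 0 (map f (seq 0 n)) + f n).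
  induction (map f (seq 0 n)); simpl; lra. Qed.

Lemma sumR_one n (f g : nat -> R) u : (u < n)%nat ->
  (forall i, i <> u -> g i = f i) -> sumR n g = sumR n f + (g u - f u).
Proof. intros Hu H. assert (forall m, sumR m g = sumR m f + (if Nat.ltb u m then g u - f u else 0)).
  { induction m. unfold sumR; simpl. lra. rewrite !sumR_S, IHm.
    destruct (Nat.ltb_spec u m); destruct (Nat.ltb_spec u (S m)); try lia.
    - rewrite (H m) by lia. lra.
    - assert (u = m) by lia; subst. lra.
    - rewrite (H m) by lia; lra. }
  rewrite H0. destruct (Nat.ltb_spec u n); try lia. lra. Qed.

Lemma sumR_two n (f g : nat -> R) u v : u <> v -> (u < n)%nat -> (v < n)%nat ->
  (forall i, i <> u -> i <> v -> g i = f i) ->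
  sumR n g = sumR n f + (g u - f u) + (g v - f v).
Proof. intros Huv Hu Hv H.
  set (m := fun i => if Nat.eqb i u then g i else f i).
  assert (E1 : sumR n m = sumR n f + (m u - f u)).
  { apply sumR_one; auto. intros i Hi. unfold m. destruct (Nat.eqb_spec i u); try lia; auto. }
  assert (E2 : sumR n g = sumR n m + (g v - m v)).
  { apply sumR_one; auto. intros i Hi. unfold m. destruct (Nat.eqb_spec i u); auto. }
  rewrite E2, E1. unfold m. rewrite Nat.eqb_refl. destruct (Nat.eqb_spec v u); try lia. lra. Qed.


Lemma sqn x : 0 <= x * x.
Proof. pose proof (Rle_0_sqr x). unfold Rsqr in H. lra. Qed.

Definition pos (x : R) := Rmax 0 x.
Definition psi (c y : R) := pos (y - c) * pos (y - c).
Definition phi (c y : R) := psi c y + psi c (- y).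

Lemma pos_cases x : (x <= 0 /\ pos x = 0) \/ (0 <= x /\ pos x = x).
Proof. unfold pos, Rmax. destruct (Rle_dec 0 x); [right|left]; lra. Qed.

Lemma psi_nonneg c y : 0 <= psi c y.
Proof. unfold psi. destruct (pos_cases (y - c)) as [[_ ->]|[? ->]]. lra. apply sqn. Qed.

Lemma phi_nonneg c y : 0 <= phi c y.
Proof. unfold phi. pose proof (psi_nonneg c y); pose proof (psi_nonneg c (-y)); lra. Qed.

Lemma psi_tangent c x y : psi c x + 2 * pos (x - c) * (y - x) <= psi c y.
Proof. unfold psi. destruct (pos_cases (x - c)) as [[? ->]|[? ->]];
  destruct (pos_cases (y - c)) as [[? ->]|[? ->]].
  - lra.
  - pose proof (sqn (y - c)). lra.
  - assert (0 <= (x - c) * (c - y)) by (apply Rmult_le_pos; lra). nra.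
  - pose proof (sqn (y - x)). nra. Qed.

Lemma pos_mono a b : a <= b -> pos a <= pos b.
Proof. intros. destruct (pos_cases a) as [[? ->]|[? ->]]; destruct (pos_cases b) as [[? ->]|[? ->]]; lra. Qed.

Lemma psi_major c lo hi p q : lo <= q -> q <= p -> p <= hi -> p + q = hi + lo ->
  psi c p + psi c q <= psi c hi + psi c lo.
Proof. intros. pose proof (psi_tangent c p hi). pose proof (psi_tangent c q lo).
  pose proof (pos_mono (q - c) (p - c) ltac:(lra)).
  pose proof (pos_cases (q-c)). pose proof (pos_cases (p-c)). nra. Qed.

Lemma phi_major c lo hi p q : lo <= q -> q <= p -> p <= hi -> p + q = hi + lo ->
  phi c p + phi c q <= phi c hi + phi c lo.
Proof. intros. unfold phi. pose proof (psi_major c lo hi p q).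
  pose proof (psi_major c (-hi) (-lo) (-q) (-p)). lra. Qed.

Lemma sq_major lo hi p q : lo <= q -> q <= p -> p <= hi -> p + q = hi + lo ->
  p*p + q*q <= hi*hi + lo*lo.
Proof. intros. nra. Qed.

Lemma psi_zero c y : y <= c -> psi c y = 0.
Proof. intros. unfold psi. destruct (pos_cases (y - c)) as [[? ->]|[? ->]]; nra. Qed.

Lemma psi_le c y z : y - c <= z -> 0 <= z -> psi c y <= z * z.
Proof. intros. unfold psi. destruct (pos_cases (y - c)) as [[? ->]|[? ->]]; nra. Qed.

Lemma phi_le_sq c y : 0 <= c -> phi c y <= y * y.
Proof. intros. unfold phi, psi. destruct (pos_cases (y - c)) as [[? ->]|[? ->]];
  destruct (pos_cases (-y - c)) as [[? ->]|[? ->]]; nra. Qed.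

Lemma phi_big c y : 0 <= c -> 2 * c < Rabs y -> c * c <= phi c y.
Proof. intros. unfold phi, psi. unfold Rabs in *. destruct (Rcase_abs y);
  destruct (pos_cases (y - c)) as [[? ->]|[? ->]];
  destruct (pos_cases (-y - c)) as [[? ->]|[? ->]]; nra. Qed.

Lemma phi_small c y : Rabs y <= c -> phi c y = 0.
Proof. intros. unfold phi. unfold Rabs in H. destruct (Rcase_abs y); rewrite !psi_zero; lra. Qed.

Lemma pair_real c p q p' q' : 10 <= c ->
  p' + q' = p + q -> q' <= p' -> Rmin p q <= q' -> p' <= Rmax p q ->
  2 * p' <= p + q + 1 -> p + q - 1 <= 2 * q' ->
  phi c p' + phi c q' <= phi c p + phi c q - (if Rle_dec (Rabs q) 2 then phi c p / 2 else 0).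
Proof. intros Hc Hs H1 H2 H3 H4 H5.
  assert (M : phi c p' + phi c q' <= phi c p + phi c q).
  { unfold Rmin, Rmax in *. destruct (Rle_dec p q).
    - rewrite Rplus_comm with (r1 := phi c p). apply phi_major; lra.
    - apply phi_major; lra. }
  destruct (Rle_dec (Rabs q) 2) as [Hq|Hq]; [|lra].
  rewrite (phi_small c q) by lra.
  assert (Hq' : -2 <= q <= 2) by (unfold Rabs in Hq; destruct (Rcase_abs q); lra).
  destruct (Rle_dec (Rabs p) c) as [Hp|Hp].
  - rewrite (phi_small c p) in * by lra. rewrite (phi_small c q) in M by lra. lra.
  - unfold Rabs in Hp. destruct (Rcase_abs p).
    +
      unfold phi. rewrite (psi_zero c p) by lra. rewrite (psi_zero c p') by lra. rewrite (psi_zero c q') by lra.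
      pose proof (psi_le c (-p') ((-p - c)/2) ltac:(lra) ltac:(lra)).
      pose proof (psi_le c (-q') ((-p - c)/2) ltac:(lra) ltac:(lra)).
      assert (psi c (-p) = (-p - c) * (-p - c)). { unfold psi. destruct (pos_cases (-p - c)) as [[? ->]|[? ->]]; lra. }
      lra.
    + unfold phi. rewrite (psi_zero c (-p)) by lra. rewrite (psi_zero c (-p')) by lra. rewrite (psi_zero c (-q')) by lra.
      pose proof (psi_le c p' ((p - c)/2) ltac:(lra) ltac:(lra)).
      pose proof (psi_le c q' ((p - c)/2) ltac:(lra) ltac:(lra)).
      assert (psi c p = (p - c) * (p - c)). { unfold psi. destruct (pos_cases (p - c)) as [[? ->]|[? ->]]; lra. }
      lra.
Qed.

Lemma pair_int (A B : Z) : let A' := ((A + B + 1) / 2)%Z in let B' := ((A + B) / 2)%Z in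
  (A' + B' = A + B /\ B' <= A' /\ Z.min A B <= B' /\ A' <= Z.max A B /\ 2 * A' <= A + B + 1 /\ A + B - 1 <= 2 * B')%Z.
Proof. intros A' B'. subst A' B'. Z.div_mod_to_equations. lia. Qed.

Lemma pair_R (A B : Z) (a : R) : let p := IZR A - a in let q := IZR B - a in
  let p' := IZR ((A + B + 1) / 2) - a in let q' := IZR ((A + B) / 2) - a in
  p' + q' = p + q /\ q' <= p' /\ Rmin p q <= q' /\ p' <= Rmax p q /\
  2 * p' <= p + q + 1 /\ p + q - 1 <= 2 * q'.
Proof. intros. destruct (pair_int A B) as (E1 & E2 & E3 & E4 & E5 & E6).
  set (A' := ((A + B + 1) / 2)%Z) in *. set (B' := ((A + B) / 2)%Z) in *.
  apply (f_equal IZR) in E1. rewrite !plus_IZR in E1.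
  apply IZR_le in E2. apply IZR_le in E5. apply IZR_le in E6.
  rewrite !plus_IZR, mult_IZR in E5. rewrite minus_IZR, plus_IZR, mult_IZR in E6.
  unfold p, q, p', q'. unfold Rmin, Rmax.
  destruct (Z.min_spec A B) as [[? Hm]|[? Hm]]; rewrite Hm in E3; apply IZR_le in E3;
  destruct (Z.max_spec A B) as [[? HM]|[? HM]]; rewrite HM in E4; apply IZR_le in E4;
  apply IZR_lt in H || apply IZR_le in H; apply IZR_lt in H0 || apply IZR_le in H0;
  destruct (Rle_dec (IZR A - a) (IZR B - a)); simpl in *; repeat split; lra.
Qed.


Definition Psi (n : nat) (c a : R) (L : load) : R := sumR n (fun i => phi c (IZR (L i) - a)).

Lemma sumR_sumL n f : sumR n f = sumL (seq 0 n) f.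
Proof. reflexivity. Qed.

Lemma sumR_ext n f g : (forall i, (i < n)%nat -> f i = g i) -> sumR n f = sumR n g.
Proof. intros. rewrite !sumR_sumL. apply sumL_ext. intros x Hx. apply in_seq in Hx. apply H; lia. Qed.

Lemma sumR_le n f g : (forall i, (i < n)%nat -> f i <= g i) -> sumR n f <= sumR n g.
Proof. intros. rewrite !sumR_sumL. apply sumL_le. intros x Hx. apply in_seq in Hx. apply H; lia. Qed.

Lemma sumR_const n r : sumR n (fun _ => r) = r * INR n.
Proof. rewrite sumR_sumL. rewrite (sumL_ext _ _ (fun _ : nat => r * 1)) by (intros; ring).
  rewrite sumL_scal, sumL_length, seq_length. reflexivity. Qed.

Lemma sumR_nonneg n f : (forall i, (i < n)%nat -> 0 <= f i) -> 0 <= sumR n f.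
Proof. intros. rewrite sumR_sumL. apply sumL_nonneg. intros x Hx. apply in_seq in Hx. apply H; lia. Qed.

Lemma pairs_sum n G : sumL (pairs n) G =
  sumR n (fun u => sumR n (fun v => if Nat.eqb u v then 0 else G (u, v))).
Proof. unfold pairs. rewrite sumL_filter, sumL_prod. apply sumL_ext. intros u _. apply sumL_ext. intros v _.
  simpl. destruct (Nat.eqb u v); reflexivity. Qed.

Definition Mp n := INR (length (pairs n)).

Lemma Mp_le n : Mp n <= INR n * INR n.
Proof. unfold Mp. rewrite <- sumL_length, pairs_sum.
  apply Rle_trans with (sumR n (fun u => sumR n (fun _ => 1))).
  apply sumR_le; intros; apply sumR_le; intros. destruct (Nat.eqb i i0); lra.
  rewrite (sumR_ext n _ (fun _ => INR n)). rewrite sumR_const. lra.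
  intros. rewrite sumR_const. lra. Qed.

Lemma Mp_pos n : (2 <= n)%nat -> 0 < Mp n.
Proof. intros. unfold Mp. assert (In (0%nat, 1%nat) (pairs n)).
  { unfold pairs. apply filter_In. split; [|reflexivity]. apply in_prod; apply in_seq; lia. }
  destruct (pairs n). contradiction. simpl length. rewrite S_INR. pose proof (pos_INR (length l)). lra. Qed.

Lemma Psi_step n c a (L : load) u v : u <> v -> (u < n)%nat -> (v < n)%nat ->
  Psi n c a (step L (u, v)) = Psi n c a L
    + (phi c (IZR ((L u + L v + 1) / 2) - a) - phi c (IZR (L u) - a))
    + (phi c (IZR ((L u + L v) / 2) - a) - phi c (IZR (L v) - a)).
Proof. intros. unfold Psi. rewrite (sumR_two n _ _ u v) by (auto; intros i Hi Hj; unfold step; simpl;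
    destruct (Nat.eqb_spec i u); destruct (Nat.eqb_spec i v); try lia; reflexivity).
  unfold step; simpl. rewrite Nat.eqb_refl. destruct (Nat.eqb_spec v u); try lia. rewrite Nat.eqb_refl. reflexivity. Qed.

Lemma Phi_step n a (L : load) u v : u <> v -> (u < n)%nat -> (v < n)%nat ->
  Phi n a (step L (u, v)) <= Phi n a L.
Proof. intros. unfold Phi. rewrite (sumR_two n _ _ u v) by (auto; intros i Hi Hj; unfold step; simpl;
    destruct (Nat.eqb_spec i u); destruct (Nat.eqb_spec i v); try lia; reflexivity).
  unfold step; simpl. rewrite Nat.eqb_refl. destruct (Nat.eqb_spec v u); try lia. rewrite Nat.eqb_refl.
  destruct (pair_R (L u) (L v) a) as (E1 & E2 & E3 & E4 & _).
  set (p := IZR (L u) - a) in *. set (q := IZR (L v) - a) in *.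
  set (p' := IZR ((L u + L v + 1) / 2) - a) in *. set (q' := IZR ((L u + L v) / 2) - a) in *.
  assert (p' * p' + q' * q' <= p * p + q * q).
  { unfold Rmin, Rmax in *. destruct (Rle_dec p q).
    - pose proof (sq_major p q p' q'). lra.
    - pose proof (sq_major q p p' q'). lra. }
  simpl. lra. Qed.

Lemma Phi_step_in n a L p : In p (pairs n) -> Phi n a (step L p) <= Phi n a L.
Proof. intros H. unfold pairs in H. apply filter_In in H. destruct H as [H1 H2].
  destruct p as [u v]. apply in_prod_iff in H1. destruct H1 as [Hu Hv]. apply in_seq in Hu, Hv.
  simpl in H2. destruct (Nat.eqb_spec u v); [discriminate|]. apply Phi_step; lia. Qed.


Lemma sumR_minus n f g : sumR n (fun i => f i - g i) = sumR n f - sumR n g.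
Proof. rewrite !sumR_sumL. apply sumL_minus. Qed.
Lemma sumR_plus n f g : sumR n (fun i => f i + g i) = sumR n f + sumR n g.
Proof. rewrite !sumR_sumL. apply sumL_plus. Qed.
Lemma sumR_scal n r f : sumR n (fun i => r * f i) = r * sumR n f.
Proof. rewrite !sumR_sumL. apply sumL_scal. Qed.

Lemma Mp_sum n : Mp n = sumR n (fun u => sumR n (fun v => if Nat.eqb u v then 0 else 1)).
Proof. unfold Mp. rewrite <- sumL_length, pairs_sum. reflexivity. Qed.

Lemma count_typ n (x : nat -> R) : sumR n (fun i => x i * x i) < INR n ->
  3 * INR n / 4 <= sumR n (fun v => if Rle_dec (Rabs (x v)) 2 then 1 else 0).
Proof. intros H.
  set (cnt := sumR n (fun v => if Rle_dec (Rabs (x v)) 2 then 1 else 0)).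
  set (nc := sumR n (fun v => if Rle_dec (Rabs (x v)) 2 then 0 else 1)).
  assert (E : cnt + nc = INR n).
  { unfold cnt, nc. rewrite <- sumR_plus. rewrite (sumR_ext n _ (fun _ => 1)). rewrite sumR_const; lra.
    intros. destruct (Rle_dec (Rabs (x i)) 2); lra. }
  assert (4 * nc <= sumR n (fun i => x i * x i)).
  { unfold nc. rewrite <- sumR_scal. apply sumR_le. intros i _.
    destruct (Rle_dec (Rabs (x i)) 2). pose proof (sqn (x i)); lra.
    unfold Rabs in n0. destruct (Rcase_abs (x i)); nra. }
  lra. Qed.

Section Drift.
Variables (n : nat) (c a : R) (L : load).
Hypothesis (Hn : (2 <= n)%nat) (Hc : 10 <= c) (HPhi : Phi n a L < INR n).

Let x i := IZR (L i) - a.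
Let w u v := if Rle_dec (Rabs (x v)) 2 then phi c (x u) / 2 else 0.

Lemma step_bound u v : u <> v -> (u < n)%nat -> (v < n)%nat ->
  Psi n c a (step L (u, v)) <= Psi n c a L - w u v.
Proof. intros. rewrite Psi_step by auto.
  destruct (pair_R (L u) (L v) a) as (E1 & E2 & E3 & E4 & E5 & E6).
  pose proof (pair_real c _ _ _ _ Hc E1 E2 E3 E4 E5 E6). unfold w, x. lra. Qed.

Lemma Psi_nonneg : 0 <= Psi n c a L.
Proof. apply sumR_nonneg. intros; apply phi_nonneg. Qed.

Lemma inner_bound u : (u < n)%nat ->
  3 * INR n / 8 * phi c (x u) <= sumR n (fun v => if Nat.eqb u v then 0 else w u v).
Proof. intros Hu. pose proof (phi_nonneg c (x u)).
  destruct (Req_dec (phi c (x u)) 0) as [Z|Z].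
  - rewrite Z. rewrite Rmult_0_r. apply sumR_nonneg. intros. unfold w. rewrite Z.
    destruct (Nat.eqb u i); [lra|]. destruct (Rle_dec _ _); lra.
  - assert (Rabs (x u) > c). { destruct (Rle_dec (Rabs (x u)) c); [|lra]. exfalso; apply Z, phi_small; auto. }
    rewrite (sumR_ext n _ (fun v => phi c (x u) / 2 * (if Rle_dec (Rabs (x v)) 2 then 1 else 0))).
    + rewrite sumR_scal. 
      assert (3 * INR n / 4 <= sumR n (fun v => if Rle_dec (Rabs (x v)) 2 then 1 else 0)).
      { apply count_typ. unfold Phi in HPhi. rewrite (sumR_ext n _ (fun i => (IZR (L i) - a) ^ 2)); auto.
        intros; unfold x; ring. }
      nra.
    + intros v Hv. unfold w. destruct (Nat.eqb_spec u v).
      * subst. destruct (Rle_dec (Rabs (x v)) 2); lra.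
      * destruct (Rle_dec (Rabs (x v)) 2); lra.
Qed.

Lemma drift : sumL (pairs n) (fun p => Psi n c a (step L p)) / Mp n
   <= (1 - 3 / (8 * INR n)) * Psi n c a L.
Proof.
  set (P := Psi n c a L). set (M := Mp n).
  assert (HM : 0 < M) by (apply Mp_pos; auto). assert (HM2 : M <= INR n * INR n) by apply Mp_le.
  assert (HnR : 2 <= INR n) by (apply (le_INR 2 n) in Hn; simpl in Hn; lra).
  assert (HP : 0 <= P) by apply Psi_nonneg.
  assert (X : sumL (pairs n) (fun p => Psi n c a (step L p)) <= P * M - 3 * INR n / 8 * P).
  { rewrite pairs_sum.
    apply Rle_trans with (sumR n (fun u => sumR n (fun v => if Nat.eqb u v then 0 else P - w u v))).
    { apply sumR_le; intros u Hu; apply sumR_le; intros v Hv. destruct (Nat.eqb_spec u v). lra.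
      apply step_bound; auto. }
    rewrite (sumR_ext n _ (fun u => P * sumR n (fun v => if Nat.eqb u v then 0 else 1)
                                 - sumR n (fun v => if Nat.eqb u v then 0 else w u v))).
    2:{ intros u Hu. rewrite <- sumR_scal, <- sumR_minus. apply sumR_ext. intros. destruct (Nat.eqb u i); ring. }
    rewrite sumR_minus, sumR_scal, <- Mp_sum. fold M.
    assert (3 * INR n / 8 * P <= sumR n (fun u => sumR n (fun v => if Nat.eqb u v then 0 else w u v))).
    { unfold P, Psi. rewrite <- sumR_scal. apply sumR_le. intros u Hu. apply inner_bound; auto. }
    lra. }
  assert (Y : P * M <= P * (INR n * INR n)) by (apply Rmult_le_compat_l; auto).
  apply Rle_trans with ((P * M - 3 * INR n / 8 * P) / M).
  { unfold Rdiv. apply Rmult_le_compat_r; [left; apply Rinv_0_lt_compat; auto| auto]. }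
  apply (Rmult_le_reg_r M); auto.
  replace ((P * M - 3 * INR n / 8 * P) / M * M) with (P * M - 3 * INR n / 8 * P) by (field; lra).
  replace ((1 - 3 / (8 * INR n)) * P * M) with (P * M - 3 / 8 * (P * M / INR n)) by (field; lra).
  assert (P * M / INR n <= INR n * P).
  { unfold Rdiv. apply (Rmult_le_reg_r (INR n)); [lra|]. rewrite Rmult_assoc, Rinv_l by lra. lra. }
  lra.
Qed.
End Drift.


Definition Avg n N (F : list (nat * nat) -> R) := sumL (seqs n N) F / INR (length (seqs n N)).

Lemma len_seqs_S n N : INR (length (seqs n (S N))) = INR (length (seqs n N)) * Mp n.
Proof. rewrite <- !sumL_length. simpl seqs. rewrite sumL_flat_map.
  rewrite (sumL_ext _ _ (fun _ => Mp n * 1)). rewrite sumL_scal. ring.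
  intros. rewrite sumL_map, sumL_length. unfold Mp. ring. Qed.

Lemma len_seqs_pos n N : (2 <= n)%nat -> 0 < INR (length (seqs n N)).
Proof. intros. induction N. simpl. lra. rewrite len_seqs_S. apply Rmult_lt_0_compat; auto. apply Mp_pos; auto. Qed.

Lemma seqs_prop n N s : In s (seqs n N) -> length s = N /\ Forall (fun p => In p (pairs n)) s.
Proof. revert s. induction N; simpl; intros s H.
  - destruct H as [<-|[]]. split; auto.
  - apply in_flat_map in H. destruct H as [s0 [H0 H1]]. apply in_map_iff in H1. destruct H1 as [p [<- Hp]].
    destruct (IHN s0 H0) as [E F]. split. rewrite length_app; simpl; lia. apply Forall_app; split; auto. Qed.

Section AvgS.
Variables (n : nat) (Hn : (2 <= n)%nat).

Lemma Avg_step N F : Avg n (S N) F = Avg n N (fun s => sumL (pairs n) (fun p => F (s ++ [p])) / Mp n).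
Proof. unfold Avg. rewrite len_seqs_S. simpl seqs. rewrite sumL_flat_map.
  pose proof (Mp_pos n Hn). pose proof (len_seqs_pos n N Hn).
  rewrite (sumL_ext _ (fun x => sumL _ F) (fun s => sumL (pairs n) (fun p => F (s ++ [p])))).
  2:{ intros. rewrite sumL_map. reflexivity. }
  rewrite (sumL_ext _ (fun s => sumL _ _ / Mp n) (fun s => / Mp n * sumL (pairs n) (fun p => F (s ++ [p])))) by (intros; unfold Rdiv; ring).
  rewrite sumL_scal. field. lra. Qed.

Lemma Avg_le N F G : (forall s, In s (seqs n N) -> F s <= G s) -> Avg n N F <= Avg n N G.
Proof. intros. unfold Avg. unfold Rdiv. apply Rmult_le_compat_r.
  left; apply Rinv_0_lt_compat, len_seqs_pos; auto. apply sumL_le; auto. Qed.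

Lemma Avg_ext N F G : (forall s, In s (seqs n N) -> F s = G s) -> Avg n N F = Avg n N G.
Proof. intros. unfold Avg. rewrite (sumL_ext _ F G); auto. Qed.

Lemma Avg_const N r : Avg n N (fun _ => r) = r.
Proof. unfold Avg. pose proof (len_seqs_pos n N Hn). rewrite (sumL_ext _ _ (fun _ => r * 1)) by (intros; ring).
  rewrite sumL_scal, sumL_length. field. lra. Qed.

Lemma Avg_scal N r F : Avg n N (fun s => r * F s) = r * Avg n N F.
Proof. unfold Avg. rewrite sumL_scal. unfold Rdiv. ring. Qed.

Lemma Avg_sum {A} N (l : list A) g : Avg n N (fun s => sumL l (fun t => g t s)) = sumL l (fun t => Avg n N (g t)).
Proof. unfold Avg. rewrite sumL_swap. unfold Rdiv. rewrite Rmult_comm, <- sumL_scal. apply sumL_ext. intros. apply Rmult_comm. Qed.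

Lemma Avg_lift k F : (forall s p, (k <= length s)%nat -> F (s ++ [p]) = F s) ->
  forall N, (k <= N)%nat -> Avg n N F = Avg n k F.
Proof. intros H N HN. induction HN; auto. rewrite Avg_step, <- IHHN. apply Avg_ext.
  intros s Hs. destruct (seqs_prop n m s Hs) as [E _].
  pose proof (Mp_pos n Hn).
  rewrite (sumL_ext _ _ (fun _ => F s * 1)). rewrite sumL_scal, sumL_length. fold (Mp n). field. lra.
  intros. rewrite H by lia. ring. Qed.
End AvgS.


Lemma traj_app L0 s r t : (t <= length s)%nat -> traj L0 (s ++ r) t = traj L0 s t.
Proof. intros. unfold traj. rewrite firstn_app. replace (t - length s)%nat with 0%nat by lia. simpl. rewrite app_nil_r. reflexivity. Qed.

Lemma traj_last L0 s p : traj L0 (s ++ [p]) (S (length s)) = step (traj L0 s (length s)) p.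
Proof. unfold traj. rewrite firstn_all2 by (rewrite length_app; simpl; lia). rewrite firstn_all. rewrite fold_left_app. reflexivity. Qed.

Lemma is_T1_app n L0 s r t1 : (t1 <= length s)%nat -> (is_T1 n L0 (s ++ r) t1 <-> is_T1 n L0 s t1).
Proof. intros. unfold is_T1. rewrite traj_app by lia. split; intros [H1 H2]; split; auto; intros t Ht.
  - rewrite <- traj_app with (r := r) by lia. auto.
  - rewrite traj_app by lia. auto. Qed.

Lemma Phi_mono n a l L : Forall (fun p => In p (pairs n)) l -> Phi n a (fold_left step l L) <= Phi n a L.
Proof. revert L. induction l; simpl; intros L H. lra. inversion H; subst.
  eapply Rle_trans. apply IHl; auto. apply Phi_step_in; auto. Qed.

Lemma T1_unique n L0 s t1 t2 : is_T1 n L0 s t1 -> is_T1 n L0 s t2 -> t1 = t2.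
Proof. intros [A1 B1] [A2 B2]. destruct (Nat.lt_total t1 t2) as [H|[H|H]]; auto.
  specialize (B2 t1 H); lra. specialize (B1 t2 H); lra. Qed.

Lemma Psi_le_Phi n c a L : 0 <= c -> Psi n c a L <= Phi n a L.
Proof. intros. unfold Psi, Phi. apply sumR_le. intros. pose proof (phi_le_sq c (IZR (L i) - a) H). simpl. lra. Qed.

Section Main.
Variables (n : nat) (c : R) (L0 : load).
Hypothesis (Hn : (2 <= n)%nat) (Hc : 10 <= c).
Let a := avg n L0.
Let rho := 1 - 3 / (8 * INR n).

Definition ind t1 (s : list (nat * nat)) : R := if excluded_middle_informative (is_T1 n L0 s t1) then 1 else 0.
Definition Hf t1 j s := ind t1 s * Psi n c a (traj L0 s (t1 + j)).

Lemma ind_app t1 s p : (t1 <= length s)%nat -> ind t1 (s ++ [p]) = ind t1 s.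
Proof. intros. unfold ind. destruct (excluded_middle_informative (is_T1 n L0 (s ++ [p]) t1)) as [X|X];
  destruct (excluded_middle_informative (is_T1 n L0 s t1)) as [Y|Y]; auto.
  exfalso; apply Y; apply (is_T1_app n L0 s [p]); auto.
  exfalso; apply X; apply (is_T1_app n L0 s [p]); auto. Qed.

Lemma rho_nonneg : 0 <= rho.
Proof. unfold rho. assert (2 <= INR n) by (apply (le_INR 2 n) in Hn; simpl in Hn; lra).
  assert (3 / (8 * INR n) <= 1). { apply (Rmult_le_reg_r (8 * INR n)); [lra|]. unfold Rdiv. rewrite Rmult_assoc, Rinv_l by lra. lra. }
  lra. Qed.

Lemma Phi_after t1 s : In s (seqs n (length s)) -> is_T1 n L0 s t1 -> (t1 <= length s)%nat ->
  Phi n a (traj L0 s (length s)) < INR n.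
Proof. intros Hs [H1 _] Ht. destruct (seqs_prop n _ s Hs) as [_ V].
  unfold traj at 1. rewrite firstn_all. rewrite <- (firstn_skipn t1 s) at 1. rewrite fold_left_app.
  rewrite <- (firstn_skipn t1 s) in V. apply Forall_app in V. destruct V as [_ V].
  eapply Rle_lt_trans. apply Phi_mono; auto. exact H1. Qed.

Lemma Hbound t1 j : Avg n (t1 + j) (Hf t1 j) <= rho ^ j * INR n * Avg n t1 (ind t1).
Proof. induction j.
  - rewrite Nat.add_0_r. simpl. rewrite Rmult_1_l, <- Avg_scal by auto. apply Avg_le; auto. intros s Hs.
    unfold Hf, ind. rewrite Nat.add_0_r. destruct (excluded_middle_informative _) as [X|X]; [|lra].
    destruct X as [X1 X2]. pose proof (Psi_le_Phi n c a (traj L0 s t1) ltac:(lra)). fold a in X1. lra.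
  - replace (t1 + S j)%nat with (S (t1 + j)) by lia. rewrite Avg_step by auto.
    apply Rle_trans with (Avg n (t1 + j) (fun s => rho * Hf t1 j s)).
    + apply Avg_le; auto. intros s Hs. destruct (seqs_prop n _ s Hs) as [E V].
      rewrite (sumL_ext _ _ (fun p => ind t1 s * Psi n c a (step (traj L0 s (t1 + j)) p))).
      2:{ intros p _. unfold Hf. rewrite ind_app by lia. replace (t1 + S j)%nat with (S (length s)) by lia.
          rewrite traj_last, E. reflexivity. }
      unfold Hf, ind. destruct (excluded_middle_informative _) as [X|X].
      * rewrite (sumL_ext _ _ (fun p => Psi n c a (step (traj L0 s (t1 + j)) p))) by (intros; ring).
        rewrite Rmult_1_l. unfold rho. apply drift; auto.
        rewrite <- E. apply (Phi_after t1); auto. rewrite E; auto. lia.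
      * rewrite (sumL_ext _ _ (fun p => 0 * 1)) by (intros; ring). rewrite sumL_scal. rewrite Rmult_0_l. unfold Rdiv. lra.
    + rewrite Avg_scal by auto. simpl. pose proof rho_nonneg. 
      apply Rle_trans with (rho * (rho ^ j * INR n * Avg n t1 (ind t1))). apply Rmult_le_compat_l; auto. lra.
Qed.

Lemma ind_nonneg t1 s : 0 <= ind t1 s.
Proof. unfold ind. destruct (excluded_middle_informative _); lra. Qed.

Lemma Avg_ind_nonneg N t1 : 0 <= Avg n N (ind t1).
Proof. rewrite <- (Avg_const n Hn N 0). apply Avg_le; auto. intros. apply ind_nonneg. Qed.

Lemma per_t1 T N t1 : 
  Avg n N (fun s => if Nat.leb (t1 + T) N then Hf t1 T s else 0) <= rho ^ T * INR n * Avg n N (ind t1).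
Proof. pose proof rho_nonneg. assert (0 <= rho ^ T) by (apply pow_le; auto).
  assert (0 <= INR n) by apply pos_INR. pose proof (Avg_ind_nonneg N t1).
  destruct (Nat.leb_spec (t1 + T) N).
  - rewrite (Avg_lift n Hn (t1 + T) (Hf t1 T)); auto.
    + rewrite (Avg_lift n Hn t1 (ind t1) ) by (auto; try lia; intros; apply ind_app; auto). apply Hbound.
    + intros s p Hs. unfold Hf. rewrite ind_app by lia. rewrite traj_app by lia. reflexivity.
  - rewrite Avg_const by auto. apply Rmult_le_pos; auto. apply Rmult_le_pos; auto.
Qed.

Lemma sum_ind N s : sumL (seq 0 (S N)) (fun t1 => ind t1 s) <= 1.
Proof. apply sumL_le1. apply seq_NoDup. intros; unfold ind; destruct (excluded_middle_informative _); auto.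
  intros x y _ _. unfold ind. destruct (excluded_middle_informative _) as [X|X]; [|lra].
  destruct (excluded_middle_informative _) as [Y|Y]; [|lra]. intros; eapply T1_unique; eauto. Qed.

Lemma Psi_big L i : (i < n)%nat -> ~ (IZR (L i) <= a + 2 * c /\ a - 2 * c <= IZR (L i)) -> 1 <= Psi n c a L.
Proof. intros Hi H. assert (2 * c < Rabs (IZR (L i) - a)).
  { unfold Rabs. destruct (Rcase_abs (IZR (L i) - a)); apply NNPP; intro; apply H; split; lra. }
  pose proof (phi_big c _ ltac:(lra) H0).
  assert (phi c (IZR (L i) - a) <= Psi n c a L).
  { unfold Psi. rewrite sumR_sumL. apply (sumL_ge_term _ (fun i => phi c (IZR (L i) - a))). apply in_seq; lia.
    intros; apply phi_nonneg. }
  nra. Qed.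

Lemma main_bound (T : nat) (D : R) (N : nat) : INR T <= D ->
  prob n N (bad_event n c D L0 N) <= rho ^ T * INR n.
Proof. intros HTD.
  assert (Hprob : prob n N (bad_event n c D L0 N) = Avg n N (fun s => if excluded_middle_informative (bad_event n c D L0 N s) then 1 else 0)).
  { unfold prob, Avg. rewrite length_filter_sum. f_equal. apply sumL_ext. intros. destruct (excluded_middle_informative _); auto. }
  rewrite Hprob.
  pose proof rho_nonneg. assert (0 <= rho ^ T) by (apply pow_le; auto). assert (0 <= INR n) by apply pos_INR.
  apply Rle_trans with (Avg n N (fun s => sumL (seq 0 (S N)) (fun t1 => if Nat.leb (t1 + T) N then Hf t1 T s else 0))).
  { apply Avg_le; auto. intros s Hs.
    assert (NN : forall t1, 0 <= (if Nat.leb (t1 + T) N then Hf t1 T s else 0)).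
    { intros. destruct (Nat.leb _ _); [|lra]. unfold Hf. apply Rmult_le_pos. apply ind_nonneg. apply sumR_nonneg; intros; apply phi_nonneg. }
    destruct (excluded_middle_informative _) as [B|B].
    2:{ apply sumL_nonneg; auto. }
    destruct B as [t1 [HT1 [HD W]]].
    assert (Ht1N : (t1 + T <= N)%nat). { apply INR_le. rewrite plus_INR. lra. }
    eapply Rle_trans; [|apply (sumL_ge_term _ _ t1)]; auto.
    - simpl. destruct (Nat.leb_spec (t1 + T) N); [|lia]. unfold Hf, ind. destruct (excluded_middle_informative _) as [_|X]; [|contradiction].
      rewrite Rmult_1_l. specialize (W (t1 + T)%nat ltac:(lia) ltac:(rewrite plus_INR; lra)).
      unfold good in W. apply not_all_ex_not in W. destruct W as [i W]. apply imply_to_and in W. destruct W as [Hi W].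
      apply (Psi_big _ i); auto.
    - apply in_seq. apply INR_le in HD || idtac. assert (t1 <= N)%nat by lia. lia. }
  rewrite Avg_sum by auto.
  apply Rle_trans with (sumL (seq 0 (S N)) (fun t1 => rho ^ T * INR n * Avg n N (ind t1))).
  { apply sumL_le. intros. apply per_t1. }
  rewrite sumL_scal. rewrite <- Avg_sum by auto.
  assert (Avg n N (fun s => sumL (seq 0 (S N)) (fun t => ind t s)) <= 1).
  { rewrite <- (Avg_const n Hn N 1). apply Avg_le; auto. intros. apply sum_ind. }
  apply Rle_trans with (rho ^ T * INR n * 1). apply Rmult_le_compat_l. apply Rmult_le_pos; auto. auto. lra.
Qed.
End Main.


Lemma exp_pow x k : exp x ^ k = exp (INR k * x).
Proof. induction k. simpl. rewrite Rmult_0_l, exp_0. reflexivity.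
  simpl pow. rewrite IHk, <- exp_plus, S_INR. f_equal. ring. Qed.

Lemma final_num (n : nat) (T : nat) : (2 <= n)%nat ->
  8 * INR n * ln (INR n) - 1 < INR T ->
  (1 - 3 / (8 * INR n)) ^ T * INR n <= 1 / INR n.
Proof. intros Hn HT. assert (Hn2 : 2 <= INR n) by (apply (le_INR 2 n) in Hn; simpl in Hn; lra).
  assert (Hl : / 2 < ln (INR n)).
  { pose proof ln_lt_2. destruct (Req_dec (INR n) 2) as [E|E]. rewrite E; auto.
    pose proof (ln_increasing 2 (INR n) ltac:(lra) ltac:(lra)). lra. }
  set (x := 3 / (8 * INR n)).
  assert (Hx : 0 <= x <= 1).
  { unfold x; split. apply Rmult_le_pos; [lra|]. left; apply Rinv_0_lt_compat; lra.
    apply (Rmult_le_reg_r (8 * INR n)); [lra|]. unfold Rdiv. rewrite Rmult_assoc, Rinv_l by lra. lra. }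
  assert (H1 : (1 - x) ^ T <= exp (- x) ^ T).
  { apply pow_incr. split. lra. pose proof (exp_ineq1_le (- x)). lra. }
  rewrite exp_pow in H1.
  assert (H2 : INR T * - x <= - (ln (INR n) + ln (INR n))).
  { unfold x. assert (INR T * (3 / (8 * INR n)) = 3 * INR T / (8 * INR n)) by (field; lra).
    assert (2 * ln (INR n) <= 3 * INR T / (8 * INR n)).
    { apply (Rmult_le_reg_r (8 * INR n)); [lra|].
      replace (3 * INR T / (8 * INR n) * (8 * INR n)) with (3 * INR T) by (field; lra).
      assert (1 <= INR n * ln (INR n)) by nra. nra. }
    lra. }
  assert (H3 : exp (INR T * - x) <= exp (- (ln (INR n) + ln (INR n)))).
  { destruct (Req_dec (INR T * - x) (- (ln (INR n) + ln (INR n)))) as [E|E]. rewrite E; lra.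
    left; apply exp_increasing; lra. }
  rewrite exp_Ropp, exp_plus, exp_ln in H3 by lra.
  assert (H4 : (1 - x) ^ T <= / (INR n * INR n)) by lra.
  apply Rle_trans with (/ (INR n * INR n) * INR n). apply Rmult_le_compat_r; lra.
  right. field. lra. Qed.

Theorem lemma4 (c : R) (hc : 10 <= c) :
  exists K C : R, forall (n : nat), (2 <= n)%nat ->
    forall (l0 : nat -> nat) (N : nat),
      prob n N (bad_event n c (K * INR n * ln (INR n)) (fun i => Z.of_nat (l0 i)) N)
        <= C / INR n.
Proof. exists 8, 1. intros n Hn l0 N.
  assert (Hn2 : 2 <= INR n) by (apply (le_INR 2 n) in Hn; simpl in Hn; lra).
  set (D := 8 * INR n * ln (INR n)).
  assert (HD : 0 < D).
  { unfold D. pose proof ln_lt_2. assert (0 < ln (INR n)).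
    { destruct (Req_dec (INR n) 2) as [E|E]. rewrite E; lra. pose proof (ln_increasing 2 (INR n) ltac:(lra) ltac:(lra)). lra. }
    apply Rmult_lt_0_compat; lra. }
  destruct (archimed D) as [A1 A2].
  assert (Hup : (1 <= up D)%Z). { assert (0 < up D)%Z by (apply lt_IZR; lra). lia. }
  set (T := Z.to_nat (up D - 1)).
  assert (HT : INR T = IZR (up D) - 1).
  { unfold T. rewrite INR_IZR_INZ, Z2Nat.id by lia. rewrite minus_IZR. reflexivity. }
  eapply Rle_trans. apply (main_bound n c _ Hn hc T D N). lra.
  apply final_num; auto. fold D. lra.
Qed.
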